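(* Let $1\le k\le r$ and let $\mathscr{I}=[I_0,\dots,I_{k-1}]$ be an ideal of $\Omega_{H_{k-1}}$. Then (1) $[I_0,\dots,I_{k-1},L(I_{k-1})]$, where $L(I_{k-1})=(\mathrm{res}^k_{k-1})^{-1}(I_{k-1})$, is an ideal of $\Omega_{H_k}$, and it is the largest ideal $[I_0,\dots,I_{k-1},J]$ of $\Omega_{H_k}$ whose restriction to $H_{k-1}$ is $\mathscr I$; (2) $[I_0,\dots,I_{k-1},S(I_{k-1})]$, where $S(I_{k-1})$ is the ideal of $R_k$ generated by $\mathrm{ind}^k_{k-1}(I_{k-1})\cup\mathrm{jnd}^k_{k-1}(I_{k-1})$, is an ideal of $\Omega_{H_k}$, and it is the smallest ideal of $\Omega_{H_k}$ whose restriction to $H_{k-1}$ is $\mathscr I$.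
   Context: Fix a prime $p$ and an integer $r\ge0$. For $0\le k\le r$ let $R_k$ be the commutative ring which is free as a $\mathbb{Z}$-module with basis $X_{k,0},\dots,X_{k,k}$ and multiplication $X_{k,i}X_{k,j}=p^{k-\max(i,j)}X_{k,\min(i,j)}$; thus $X_{k,k}=1$, and an integer $n$ is identified with $nX_{k,k}$. For $0\le k\le\ell\le r$ define: the additive map $\mathrm{ind}^\ell_k:R_k\to R_\ell$, $X_{k,i}\mapsto X_{\ell,i}$; the ring homomorphism $\mathrm{res}^\ell_k:R_\ell\to R_k$, $\mathrm{res}^\ell_k(X_{\ell,i})=p^{\ell-k}X_{k,i}$ if $i\le k$ and $=p^{\ell-i}$ if $i\ge k$; and the multiplicative map $\mathrm{jnd}^\ell_k:R_k\to R_\ell$, $$\mathrm{jnd}^\ell_k\Big(\sum_{i=0}^k m_iX_{k,i}\Big)=m_kX_{\ell,\ell}+\sum_{k\le i<\ell}\frac{m_k^{p^{\ell-i}}-m_k^{p^{\ell-i-1}}}{p^{\ell-i}}X_{\ell,i}+\sum_{0\le i<k}\frac{(\sum_{s=i}^k m_sp^{k-s})^{p^{\ell-k}}-(\sum_{s=i+1}^k m_sp^{k-s})^{p^{\ell-k}}}{p^{\ell-i}}X_{\ell,i}$$ ($m_i\in\mathbb{Z}$). For $k=\ell$ these maps are the identity. These data form the Burnside Tambara functor on $\mathbb{Z}/p^r\mathbb{Z}$, and keeping only indices $\le n$ gives $\Omega_{H_n}$. An ideal of $\Omega_{H_n}$ is a sequence $[I_0,\dots,I_n]$ of ideals $I_k\subseteq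 R_k$ such that for every $1\le k\le n$: $\mathrm{ind}^k_{k-1}(I_{k-1})\subseteq I_k$, $\mathrm{res}^k_{k-1}(I_k)\subseteq I_{k-1}$, $\mathrm{jnd}^k_{k-1}(I_{k-1})\subseteq I_k$. Inclusion is componentwise; the restriction of $[I_0,\dots,I_n]$ to $H_i$ ($i\le n$) is $[I_0,\dots,I_i]$. *)

(* Defs.v *)
From HB Require Import structures.
From mathcomp Require Import all_boot all_order all_algebra.
Set Implicit Arguments. Unset Strict Implicit. Unset Printing Implicit Defensive.
Import Order.TTheory GRing.Theory Num.Theory.
Local Open Scope ring_scope.

(* R_k : elements are integer coefficient vectors (m_0,...,m_k) standing for
   sum_i m_i X_{k,i}. *)
Definition Rk (k : nat) := {ffun 'I_k.+1 -> int}.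

Definition zeroR (k : nat) : Rk k := [ffun => 0].
Definition addR (k : nat) (x y : Rk k) : Rk k := [ffun i => x i + y i].
Definition oppR (k : nat) (x : Rk k) : Rk k := [ffun i => - x i].

(* X_{k,i} X_{k,j} = p^(k - max i j) X_{k, min i j}, extended bilinearly. *)
Definition mulR (p k : nat) (x y : Rk k) : Rk k :=
  [ffun m : 'I_k.+1 =>
     \sum_(i < k.+1) \sum_(j < k.+1)
        (if minn i j == m then x i * y j * (p ^ (k - maxn i j))%:Z else 0)].

Definition is_ideal (p k : nat) (J : Rk k -> Prop) : Prop :=
  [/\ J (zeroR k),
      (forall x y, J x -> J y -> J (addR x y)),
      (forall x, J x -> J (oppR x)) &
      (forall r x, J x -> J (mulR p r x))].

Definition indR (k l : nat) (x : Rk k) : Rk l :=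
  [ffun i : 'I_l.+1 => if (i <= k)%N then x (inord i) else 0].

(* res^l_k : X_{l,i} |-> p^(l-k) X_{k,i} (i <= k), p^(l-i) X_{k,k} (i >= k) *)
Definition resR (p k l : nat) (x : Rk l) : Rk k :=
  [ffun j : 'I_k.+1 =>
     if (j < k)%N then (p ^ (l - k))%:Z * x (inord j)
     else \sum_(i < l.+1 | (k <= i)%N) (p ^ (l - i))%:Z * x i].

(* jnd^l_k, with the (exact) integer divisions given by divz *)
Definition jndR (p k l : nat) (x : Rk k) : Rk l :=
  let mk := x ord_max in
  let part (i : nat) := \sum_(s < k.+1 | (i <= s)%N) x s * (p ^ (k - s))%:Z in
  [ffun i : 'I_l.+1 =>
     if (i == l :> nat) then mk
     else if (k <= i)%N then
       divz (mk ^+ (p ^ (l - i)) - mk ^+ (p ^ (l - i - 1))) (p ^ (l - i))%:Z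
     else
       divz (part i ^+ (p ^ (l - k)) - part i.+1 ^+ (p ^ (l - k)))
            (p ^ (l - i))%:Z].

(* An ideal of Omega_{H_n}: a family of ideals I_j of R_j (only j <= n matter) *)
Definition omega_ideal (p n : nat) (I : forall j : nat, Rk j -> Prop) : Prop :=
  (forall j, (j <= n)%N -> is_ideal p (I j)) /\
  (forall k, (0 < k <= n)%N ->
     [/\ (forall x, I k.-1 x -> I k (indR k x)),
         (forall x, I k x -> I k.-1 (resR p k.-1 x)) &
         (forall x, I k.-1 x -> I k (jndR p k x))]).

Definition Lideal (p k : nat) (I : Rk k.-1 -> Prop) : Rk k -> Prop :=
  fun x => I (resR p k.-1 x).

(* S(I) = ideal of R_k generated by ind(I) ∪ jnd(I) (intersection of all
   ideals containing this set) *)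
Definition Sideal (p k : nat) (I : Rk k.-1 -> Prop) : Rk k -> Prop :=
  fun x => forall J : Rk k -> Prop, is_ideal p J ->
    (forall y, I y -> J (indR k y)) -> (forall y, I y -> J (jndR p k y)) -> J x.

(* Main.v *)
Require Import Defs.
From HB Require Import structures.
From mathcomp Require Import all_boot all_order all_algebra finfield ring zify.
Import Order.TTheory GRing.Theory Num.Theory.
Local Open Scope ring_scope.
Lemma fermat_int (p : nat) (m : int) : prime p -> (p %| m ^+ p - m)%Z.
Proof.
move=> pp.
rewrite (dvdz_pcharf (pchar_Fp pp)) rmorphB rmorphXn /=.
have := @expf_card _ (m%:~R : 'F_p).
by rewrite card_Fp // => ->; rewrite subrr.
Qed.
Lemma dvd_subXX (d a b : int) n : (d %| a - b)%Z -> (d %| a ^+ n - b ^+ n)%Z.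
Proof. by move=> h; rewrite subrXX dvdz_mulr. Qed.

Lemma dvd_liftp (p e : nat) (a b : int) : prime p -> (0 < e)%N ->
  ((p ^ e)%:Z %| a - b)%Z -> ((p ^ e.+1)%:Z %| a ^+ p - b ^+ p)%Z.
Proof.
move=> pp e0 h.
have hp : (p%:Z %| a - b)%Z.
  apply: dvdz_trans h; rewrite dvdzE /=; exact: dvdn_exp.
rewrite subrXX expnSr PoszM; apply: dvdz_mul => //.
set S := \sum_(_ < _) _.
have -> : S = \sum_(i < p) ((a ^+ (p.-1 - i) - b ^+ (p.-1 - i)) * b ^+ i
              + b ^+ p.-1).
  apply: eq_bigr => i _; rewrite mulrBl -exprD subnK; first by rewrite subrK.
  by rewrite -ltnS (ltn_predK (ltn_ord i)).
rewrite big_split /= sumr_const card_ord.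
rewrite rpredD //.
  by apply: rpred_sum => i _; apply: dvdz_mulr; apply: dvd_subXX.
rewrite -mulr_natr dvdz_mull // dvdzE /=.
by rewrite natz.
Qed.

Definition mark (p n i : nat) (z : Rk n) : int :=
  \sum_(s < n.+1 | (i <= s)%N) z s * (p ^ (n - s))%:Z.

Lemma down_ind (n : nat) (P : nat -> Prop) :
  P n -> (forall i, (i < n)%N -> P i.+1 -> P i) -> forall i, (i <= n)%N -> P i.
Proof.
move=> Pn IH i le_in; move: (subnKC le_in); move: (n - i)%N => d.
elim: d i {le_in} => [|d IHd] i e.
  by rewrite addn0 in e; rewrite e.
apply: IH; first by rewrite -e -addSnnS leq_addr.
by apply: IHd; rewrite addSnnS.
Qed.

Lemma mark_rec p n i (z : Rk n) : (i <= n)%N ->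
  mark p n i z = z (inord i) * (p ^ (n - i))%:Z + mark p n i.+1 z.
Proof.
move=> hi; rewrite /mark (bigD1 (inord i)) /=; last by rewrite inordK.
rewrite inordK //; congr (_ + _); apply: eq_bigl => s.
rewrite -val_eqE /= inordK // ltn_neqAle andbC eq_sym.
by case: (i <= s)%N; rewrite ?andbF ?andbT.
Qed.

Lemma mark_end p n (z : Rk n) : mark p n n.+1 z = 0.
Proof. by rewrite /mark big1 // => s; rewrite leqNgt ltn_ord. Qed.

Lemma mark_inj p n (x y : Rk n) : (0 < p)%N ->
  (forall i, (i <= n)%N -> mark p n i x = mark p n i y) -> x = y.
Proof.
move=> p0 h; apply/ffunP => j.
have hj := ltn_ord j; rewrite ltnS in hj.
have h1 : mark p n j.+1 x = mark p n j.+1 y.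
  by case: (ltnP j n) => [lt|ge]; [apply: h | rewrite (eqP (_ : j.+1 == n.+1)) ?mark_end // eqSS eqn_leq hj ge].
have := h j hj; rewrite (mark_rec p n j x hj) (mark_rec p n j y hj) h1 inord_val => /addIr/mulIf; apply.
by rewrite eqz_nat -lt0n expn_gt0 p0.
Qed.

Lemma mark_add p n i (x y : Rk n) : mark p n i (addR x y) = mark p n i x + mark p n i y.
Proof. by rewrite /mark -big_split; apply: eq_bigr => s _; rewrite ffunE mulrDl. Qed.

Lemma mark_opp p n i (x : Rk n) : mark p n i (oppR x) = - mark p n i x.
Proof. by rewrite /mark -sumrN; apply: eq_bigr => s _; rewrite ffunE mulNr. Qed.

Lemma mark_zero p n i : mark p n i (zeroR n) = 0.
Proof. by rewrite /mark big1 // => s _; rewrite ffunE mul0r. Qed.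

Lemma mark_mul p n i (x y : Rk n) :
  mark p n i (mulR p x y) = mark p n i x * mark p n i y.
Proof.
rewrite /mark big_distrlr /=.
have E : forall s : 'I_n.+1, (mulR p x y) s * (p ^ (n - s))%:Z =
  \sum_(a < n.+1) \sum_(b < n.+1)
    (if minn a b == s then x a * y b * (p ^ (n - maxn a b))%:Z else 0)
      * (p ^ (n - s))%:Z.
  by move=> s; rewrite ffunE mulr_suml; apply: eq_bigr => a _; rewrite mulr_suml.
rewrite (eq_bigr _ (fun s _ => E s)) exchange_big /= [RHS]big_mkcond /=.
apply: eq_bigr => a _; rewrite exchange_big /=.
have -> : (if (i <= a)%N then \sum_(b < n.+1 | (i <= b)%N)
     x a * (p ^ (n - a))%:Z * (y b * (p ^ (n - b))%:Z) else 0) =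
  \sum_(b < n.+1) (if (i <= a)%N && (i <= b)%N then
     x a * (p ^ (n - a))%:Z * (y b * (p ^ (n - b))%:Z) else 0).
  by case: (i <= a)%N; [rewrite big_mkcond | rewrite big1].
apply: eq_bigr => b _.
have hm : (minn a b < n.+1)%N by rewrite gtn_min ltn_ord.
rewrite big_mkcond /= (bigD1 (Ordinal hm)) //= big1; last first.
  move=> s hs; case: ifP => // _; case: eqP; last by rewrite mul0r.
  by move=> e; move: hs; rewrite -val_eqE /= e eqxx.
rewrite addr0 eqxx leq_min.
case: (i <= a)%N; case: (i <= b)%N => //=; rewrite ?mul0r //.
rewrite -mulrA -PoszM -expnD.
have -> : ((n - maxn a b) + (n - minn a b) = (n - a) + (n - b))%N.
  have ha := ltn_ord a; have hb := ltn_ord b; lia.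
rewrite expnD PoszM; ring.
Qed.

Definition sc (n : nat) (c : int) : Rk n :=
  [ffun j : 'I_n.+1 => if (j == n :> nat) then c else 0].

Lemma inord_inord m n i : (i < m.+1)%N -> @inord n (@inord m i) = @inord n i.
Proof. by move=> h; congr inord; rewrite inordK. Qed.

Lemma mark_sc p n i c : (i <= n)%N -> mark p n i (sc n c) = c.
Proof.
move: i; apply: down_ind => [|j hj IH].
  by rewrite mark_rec // mark_end ffunE inordK // eqxx subnn expn0 mulr1 addr0.
rewrite mark_rec ?(ltnW hj) // IH ffunE inordK ?ltnS ?(ltnW hj) //.
by rewrite (ltn_eqF hj) mul0r add0r.
Qed.

Lemma mark_res p n i (x : Rk n.+1) : (i <= n)%N ->
  mark p n i (resR p n x) = mark p n.+1 i x.
Proof.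
move: i; apply: down_ind => [|j hj IH].
  rewrite mark_rec // mark_end addr0 ffunE inordK // ltnn subnn expn0 mulr1.
  by rewrite /mark; apply: eq_bigr => t _; rewrite mulrC.
rewrite mark_rec ?(ltnW hj) // IH [RHS]mark_rec; last by apply: ltnW; apply: ltnW.
rewrite ffunE inordK ?ltnS ?(ltnW hj) // hj.
congr (_ + _); rewrite subSnn expn1 (subSn (ltnW hj)) expnS PoszM; ring.
Qed.

Lemma mark_ind p n i (y : Rk n) : (i <= n)%N ->
  mark p n.+1 i (indR n.+1 y) = p%:Z * mark p n i y.
Proof.
move: i; apply: down_ind => [|j hj IH].
  rewrite mark_rec // mark_rec // mark_end mark_rec // mark_end.
  rewrite !ffunE !inordK // leqnn ltnn.
  rewrite !subnn subSnn expn0 expn1 mul0r; ring.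
have hj1 : (j <= n.+1)%N by apply: leq_trans (leqnSn n); apply: ltnW.
rewrite (mark_rec p n.+1 j) // IH (mark_rec p n j y) ?(ltnW hj) //.
rewrite ffunE inordK ?ltnS ?(ltnW (ltnW hj)) // (ltnW hj).
rewrite mulrDr; congr (_ + _); rewrite subSn ?(ltnW hj) // expnS PoszM; ring.
Qed.

Lemma mark_jnd p n i (y : Rk n) : prime p -> (i <= n)%N ->
  mark p n.+1 i (jndR p n.+1 y) = (mark p n i y) ^+ p.
Proof.
move=> pp; move: i; apply: down_ind => [|j hj IH].
  rewrite mark_rec // mark_rec // mark_end (mark_rec p n n y) // mark_end.
  rewrite !ffunE /= !inordK // eqxx (ltn_eqF (ltnSn n)) leqnn.
  rewrite subSnn !subnn expn1 expn0 expr1 !mulr1 !addr0.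
  have -> : (inord n : 'I_n.+1) = ord_max by apply: val_inj; rewrite /= inordK.
  by rewrite divzK ?fermat_int // subrK.
have hj1 : (j <= n.+1)%N by apply: leq_trans (leqnSn n); apply: ltnW.
rewrite (mark_rec p n.+1 j) // IH ffunE /= inordK // (ltn_eqF (leq_trans hj (leqnSn n))).
rewrite leqNgt hj /=.
have E : forall i, (\sum_(s < n.+1 | (i <= s)%N) y s * (p ^ (n - s))%:Z) = mark p n i y by [].
rewrite !E subSnn expn1 divzK ?subrK //.
rewrite (subSn (ltnW hj)); apply: dvd_liftp => //; first by rewrite subn_gt0.
by rewrite (mark_rec p n j y) ?(ltnW hj) // addrK dvdz_mull // dvdzz.
Qed.

Section Hom.
Variable p : nat.
Hypothesis p0 : (0 < p)%N.

Lemma res_zero n : resR p n (zeroR n.+1) = zeroR n.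
Proof. by apply: (mark_inj _ _ _ _ p0) => i hi; rewrite mark_res // !mark_zero. Qed.

Lemma res_add n (x y : Rk n.+1) : resR p n (addR x y) = addR (resR p n x) (resR p n y).
Proof. by apply: (mark_inj _ _ _ _ p0) => i hi; rewrite mark_res // !mark_add !mark_res. Qed.

Lemma res_opp n (x : Rk n.+1) : resR p n (oppR x) = oppR (resR p n x).
Proof. by apply: (mark_inj _ _ _ _ p0) => i hi; rewrite mark_res // !mark_opp !mark_res. Qed.

Lemma res_mul n (x y : Rk n.+1) :
  resR p n (mulR p x y) = mulR p (resR p n x) (resR p n y).
Proof. by apply: (mark_inj _ _ _ _ p0) => i hi; rewrite mark_res // !mark_mul !mark_res. Qed.

Lemma res_ind n (y : Rk n) : resR p n (indR n.+1 y) = mulR p (sc n p%:Z) y.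
Proof.
by apply: (mark_inj _ _ _ _ p0) => i hi; rewrite mark_res // mark_mul mark_sc // mark_ind.
Qed.

Definition pw n (y : Rk n) e := iter e (fun z => mulR p z y) (sc n 1).

Lemma mark_pw n (y : Rk n) e i : (i <= n)%N -> mark p n i (pw n y e) = mark p n i y ^+ e.
Proof.
move=> hi; elim: e => [|e IH]; first by rewrite /pw /= mark_sc.
by rewrite /pw iterS mark_mul -/(pw n y e) IH exprSr.
Qed.

Lemma res_jnd n (y : Rk n) : prime p ->
  resR p n (jndR p n.+1 y) = mulR p (pw n y p.-1) y.
Proof.
move=> pp; apply: (mark_inj _ _ _ _ p0) => i hi.
rewrite mark_res // mark_jnd // mark_mul mark_pw // -exprSr prednK //.
Qed.

End Hom.

Lemma ideal_ext p n (J K : Rk n -> Prop) :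
  is_ideal p J -> (forall x, K x <-> J x) -> is_ideal p K.
Proof.
move=> [h0 hA hO hM] e; split.
- by apply/e.
- by move=> x y /e hx /e hy; apply/e; apply: hA.
- by move=> x /e hx; apply/e; apply: hO.
- by move=> r x /e hx; apply/e; apply: hM.
Qed.

Lemma L_ideal p n (J : Rk n -> Prop) : (0 < p)%N -> is_ideal p J ->
  is_ideal p (@Lideal p n.+1 J).
Proof.
move=> p0 [h0 hA hO hM]; rewrite /Lideal /=; split.
- by rewrite res_zero.
- by move=> x y hx hy; rewrite res_add //; apply: hA.
- by move=> x hx; rewrite res_opp //; apply: hO.
- by move=> r x hx; rewrite res_mul //; apply: hM.
Qed.

Lemma S_ideal p k (J : Rk k.-1 -> Prop) : is_ideal p (@Sideal p k J).
Proof.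
rewrite /Sideal; split.
- by move=> J' [] .
- by move=> x y hx hy J' hJ' hi hj; case: (hJ') => _ hA _ _; apply: hA; [apply: hx|apply: hy].
- by move=> x hx J' hJ' hi hj; case: (hJ') => _ _ hO _; apply: hO; apply: hx.
- by move=> r x hx J' hJ' hi hj; case: (hJ') => _ _ _ hM; apply: hM; apply: hx.
Qed.

Lemma extend p n (I K : forall j : nat, Rk j -> Prop) (T : Rk n.+1 -> Prop) :
  omega_ideal p n I -> is_ideal p T ->
  (forall y, I n y -> T (indR n.+1 y)) ->
  (forall x, T x -> I n (resR p n x)) ->
  (forall y, I n y -> T (jndR p n.+1 y)) ->
  (forall j, (j < n.+1)%N -> forall x, K j x <-> I j x) ->
  (forall x, K n.+1 x <-> T x) ->
  omega_ideal p n.+1 K.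
Proof.
move=> [hI1 hI2] hT hind hres hjnd eK eT; split.
  move=> j; rewrite leq_eqVlt => /orP [/eqP -> | hj].
    exact: ideal_ext hT eT.
  by apply: ideal_ext (eK j hj); apply: hI1.
move=> k /andP [k0]; rewrite leq_eqVlt => /orP [/eqP e | hk].
  subst k => /=; split.
  - by move=> x /(eK n (ltnSn n)) hx; apply/eT; apply: hind.
  - by move=> x /eT hx; apply/(eK n (ltnSn n)); apply: hres.
  - by move=> x /(eK n (ltnSn n)) hx; apply/eT; apply: hjnd.
have hk' : (k.-1 < n.+1)%N by apply: leq_ltn_trans hk; apply: leq_pred.
have [a b c] := hI2 k (introT andP (conj k0 hk)).
split.
- by move=> x /(eK _ hk') hx; apply/(eK _ hk); apply: a.
- by move=> x /(eK _ hk) hx; apply/(eK _ hk'); apply: b.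
- by move=> x /(eK _ hk') hx; apply/(eK _ hk); apply: c.
Qed.

Theorem proposition3 (p r k : nat) (I : forall j : nat, Rk j -> Prop) :
  prime p -> (1 <= k <= r)%N -> omega_ideal p k.-1 I ->
  (* (1) *)
  ((forall K : forall j : nat, Rk j -> Prop,
      (forall j, (j < k)%N -> forall x, K j x <-> I j x) ->
      (forall x, K k x <-> Lideal p (I k.-1) x) ->
      omega_ideal p k K) /\
   (forall K : forall j : nat, Rk j -> Prop,
      omega_ideal p k K ->
      (forall j, (j < k)%N -> forall x, K j x <-> I j x) ->
      forall x, K k x -> Lideal p (I k.-1) x)) /\
  (* (2) *)
  ((forall K : forall j : nat, Rk j -> Prop,
      (forall j, (j < k)%N -> forall x, K j x <-> I j x) ->
      (forall x, K k x <-> Sideal p (I k.-1) x) ->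
      omega_ideal p k K) /\
   (forall K : forall j : nat, Rk j -> Prop,
      omega_ideal p k K ->
      (forall j, (j < k)%N -> forall x, K j x <-> I j x) ->
      forall x, Sideal p (I k.-1) x -> K k x)).
Proof.
move=> pp; case: k => [//|n] _ hI /=.
have p0 := prime_gt0 pp.
have hIn : is_ideal p (I n) by case: hI => h _; apply: h.
have hL := L_ideal _ _ _ p0 hIn.
have Lind : forall y, I n y -> @Lideal p n.+1 (I n) (indR n.+1 y).
  by move=> y hy; rewrite /Lideal /= res_ind //; case: hIn => _ _ _ hM; apply: hM.
have Ljnd : forall y, I n y -> @Lideal p n.+1 (I n) (jndR p n.+1 y).
  by move=> y hy; rewrite /Lideal /= res_jnd //; case: hIn => _ _ _ hM; apply: hM.
have SL : forall x, @Sideal p n.+1 (I n) x -> @Lideal p n.+1 (I n) x.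
  by move=> x hx; apply: hx.
split; split.
- move=> K eK eT; apply: (extend _ _ _ _ _ hI hL) => //.
- move=> K [_ hK] eK x hx.
  have [_ b _] := hK n.+1 (leqnn _).
  by apply/(eK n (ltnSn n)); apply: b.
- move=> K eK eT; apply: (extend _ _ _ _ _ hI (S_ideal p n.+1 (I n))).
  + by move=> y hy J hJ h1 h2; apply: h1.
  + by move=> x hx; apply: SL.
  + by move=> y hy J hJ h1 h2; apply: h2.
  + exact: eK.
  + exact: eT.
- move=> K [hK1 hK] eK x hx; apply: hx.
  + exact: hK1.
  + have [a _ _] := hK n.+1 (leqnn _).
    by move=> y /(eK n (ltnSn n)) hy; apply: a.
  + have [_ _ c] := hK n.+1 (leqnn _).
    by move=> y /(eK n (ltnSn n)) hy; apply: c.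
Qed.
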